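(* Let $(E,B,p,\Gamma)$ be a compact graph bundle and $M\subseteq E$ a nowhere dense closed set. Then the set $\{b\in B: M_b \text{ is totally disconnected}\}$ is residual in $B$.
   Context: Compact graph bundle $(E,B,p,\Gamma)$: $E,B$ compact metric spaces, $\Gamma$ a graph (nonempty compact metric space that is a finite union of arcs pairwise disjoint or meeting only at end-points), $p:E\to B$ a continuous surjection such that every $b\in B$ has an open neighbourhood $U$ and a homeomorphism $h:p^{-1}(U)\to U\times\Gamma$ with $\mathrm{pr}_1\circ h=p$. $M_b=M\cap p^{-1}(b)$. Residual: complement of a countable union of nowhere dense sets. *)

(* Defs.v *)
From HB Require Import structures.
From mathcomp Require Import all_boot all_order all_algebra.
From mathcomp Require Import all_classical all_reals all_analysis.
Set Implicit Arguments. Unset Strict Implicit. Unset Printing Implicit Defensive.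
Import Order.TTheory GRing.Theory Num.Theory.
Local Open Scope classical_set_scope.
Local Open Scope ring_scope.

(* A compact metric space: a Hausdorff pseudometric space (= metric space)
   whose whole carrier is compact. *)
Definition compact_metric_space {R : realType} (X : pseudoMetricType R) : Prop :=
  hausdorff_space X /\ compact [set: X].

(* f parametrizes an arc: f restricted to [0,1] is continuous and injective
   (hence, [0,1] being compact and X Hausdorff, a homeomorphism onto its image). *)
Definition arc_param {R : realType} {X : topologicalType} (f : R -> X) : Prop :=
  {within `[0, 1]%classic, continuous f} /\ {in `[0, 1]%classic &, injective f}.

Definition arc_of {R : realType} {X : topologicalType} (f : R -> X) : set X :=
  f @` `[(0:R), 1]%classic.

Definition arc_ends {R : realType} {X : topologicalType} (f : R -> X) : set X :=
  [set f 0; f 1].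

Definition is_graph {R : realType} (G : pseudoMetricType R) : Prop :=
  compact_metric_space G /\ [set: G] !=set0 /\
  exists (n : nat) (f : 'I_n -> R -> G),
    (forall i, arc_param (f i)) /\
    [set: G] = \bigcup_(i in [set: 'I_n]) arc_of (f i) /\
    (forall i j, i != j ->
       arc_of (f i) `&` arc_of (f j) `<=` arc_ends (f i) `&` arc_ends (f j)).

Definition local_trivialization {R : realType} {E B G : pseudoMetricType R}
    (p : E -> B) (U : set B) (h : E -> B * G) : Prop :=
  exists g : B * G -> E,
    {within p @^-1` U, continuous h} /\
    {within U `*` [set: G], continuous g} /\
    (forall x, (p @^-1` U) x -> (U `*` [set: G]) (h x)) /\
    (forall y, (U `*` [set: G]) y -> (p @^-1` U) (g y)) /\
    (forall x, (p @^-1` U) x -> g (h x) = x) /\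
    (forall y, (U `*` [set: G]) y -> h (g y) = y) /\
    (forall x, (p @^-1` U) x -> (h x).1 = p x).

Definition compact_graph_bundle {R : realType} (E B G : pseudoMetricType R)
    (p : E -> B) : Prop :=
  compact_metric_space E /\ compact_metric_space B /\ is_graph G /\
      continuous p /\ (forall b : B, exists x : E, p x = b) /\
      (forall b : B, exists (U : set B) (h : E -> B * G),
          [/\ open U, U b & local_trivialization p U h]).

Definition nowhere_dense {T : topologicalType} (A : set T) : Prop :=
  interior (closure A) = set0.

Definition residual {T : topologicalType} (S : set T) : Prop :=
  exists F : nat -> set T, (forall n, nowhere_dense (F n)) /\
    ~` (\bigcup_n F n) `<=` S.

Definition fiber {E B : Type} (p : E -> B) (M : set E) (b : B) : set E :=
  M `&` p @^-1` [set b].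

Arguments compact_graph_bundle {R} E B G p.

(* Main.v *)
Require Import Defs.
From HB Require Import structures.
From mathcomp Require Import finmap.
From mathcomp Require Import all_boot all_order all_algebra.
From mathcomp Require Import all_classical all_reals all_analysis.
From mathcomp Require Import lra.
Set Implicit Arguments. Unset Strict Implicit. Unset Printing Implicit Defensive.
Import Order.TTheory GRing.Theory Num.Theory.
Local Open Scope classical_set_scope.
Local Open Scope ring_scope.

Lemma open_setX' (U V : topologicalType) (A : set U) (B : set V) :
  open A -> open B -> open (A `*` B).
Proof.
move=> oA oB; rewrite openE => -[x y] [/= Ax By].
exists (A, B) => //=; split; [exact: open_nbhs_nbhs | exact: open_nbhs_nbhs].
Qed.

Lemma snd_cont (U V : topologicalType) : continuous (@snd U V).
Proof. by move=> [x y]; apply: cvg_snd. Qed.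

Lemma pairy_cont (U V : topologicalType) (y : V) : continuous (fun x : U => (x, y)).
Proof. move=> x; apply: cvg_pair => //; exact: cvg_cst. Qed.


Lemma arc_inj (R : realType) (G : topologicalType) (f : R -> G) :
  arc_param f -> forall s u, 0 <= s <= 1 -> 0 <= u <= 1 -> f s = f u -> s = u.
Proof.
move=> [_ fi] s u hs hu; by apply: fi; apply/mem_set; rewrite /= in_itv /=.
Qed.

Lemma arc_seg_closed (R : realType) (G : topologicalType) (f : R -> G) a b :
  hausdorff_space G -> arc_param f -> 0 <= a -> b <= 1 -> closed (f @` `[a, b]).
Proof.
move=> hG [fc _] a0 b1; apply: compact_closed => //.
apply: continuous_compact; last exact: segment_compact.
apply: continuous_subspaceW fc => x /=; rewrite !in_itv /= => /andP[ax xb].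
apply/andP; split; [exact: le_trans ax | exact: le_trans b1].
Qed.

Lemma arc_open (R : realType) (G : topologicalType) n (f : 'I_n -> R -> G) :
  hausdorff_space G -> (forall i, arc_param (f i)) ->
  [set: G] = \bigcup_(i in [set: 'I_n]) arc_of (f i) ->
  (forall i j, i != j ->
       arc_of (f i) `&` arc_of (f j) `<=` arc_ends (f i) `&` arc_ends (f j)) ->
  forall i t1 t2, 0 <= t1 -> t1 < t2 -> t2 <= 1 -> open (f i @` `]t1, t2[).
Proof.
move=> hG hf cov dis i t1 t2 t10 t12 t21; rewrite -closedC.
have -> : ~` (f i @` `]t1,t2[) = \bigcup_(j in [set j | j != i]) arc_of (f j)
   `|` (f i @` `[0,t1] `|` f i @` `[t2,1]).
  apply/seteqP; split => x.
    move=> nx; have : [set: G] x by [].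
    rewrite cov => -[j _ [s]]; rewrite /= in_itv /= => /andP[s0 s1] fjs.
    have [eji|ji] := eqVneq j i; last by left; exists j => //; exists s => //; rewrite /= in_itv /= s0.
    subst j; right; case: (leP s t1) => st1.
      by left; exists s => //; rewrite /= in_itv /= s0.
    case: (leP t2 s) => t2s.
      by right; exists s => //; rewrite /= in_itv /= t2s.
    by exfalso; apply: nx; exists s => //; rewrite /= in_itv /= st1.
  move=> hx [s]; rewrite /= in_itv /= => /andP[t1s st2] fis.
  have s0 : 0 < s by apply: le_lt_trans t1s.
  have s1 : s < 1 by apply: lt_le_trans t21.
  have hs : 0 <= s <= 1 by rewrite !ltW.
  case: hx => [[j ji xj]|[[u]|[u]]].
  - have : (arc_of (f j) `&` arc_of (f i)) x.
      by split => //; exists s => //; rewrite /= in_itv /= hs.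
    move=> /(dis _ _ ji) [_]; rewrite /arc_ends -fis => -[] h.
    + have := arc_inj (hf i) hs _ h; rewrite lexx ler01 => /(_ isT) eq.
      by move: s0; rewrite eq ltxx.
    + have := arc_inj (hf i) hs _ h; rewrite lexx ler01 => /(_ isT) eq.
      by move: s1; rewrite eq ltxx.
  - rewrite /= in_itv /= => /andP[u0 ut1] fiu.
    have hu : 0 <= u <= 1 by rewrite u0 /= (le_trans ut1) // (le_trans (ltW t1s)) // ltW.
    have := arc_inj (hf i) hu hs; rewrite fiu fis => /(_ erefl) eq.
    by move: (le_lt_trans ut1 t1s); rewrite eq ltxx.
  - rewrite /= in_itv /= => /andP[t2u u1] fiu.
    have hu : 0 <= u <= 1 by rewrite u1 andbT (le_trans _ t2u) // (le_trans (ltW s0)) // ltW.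
    have := arc_inj (hf i) hu hs; rewrite fiu fis => /(_ erefl) eq.
    by move: (lt_le_trans st2 t2u); rewrite eq ltxx.
apply: closedU.
  apply: closed_bigcup; [exact: finite_finset|move=> j _; exact: arc_seg_closed].
apply: closedU; apply: arc_seg_closed => //.
  exact: le_trans (ltW t12) t21.
exact: le_trans (ltW t12).
Qed.


Lemma closed_pt_neq (G : topologicalType) (a x : G) :
  hausdorff_space G -> closed [set v | v = a /\ v <> x].
Proof.
move=> hG; have [ax|ax] := pselect (a = x).
  rewrite (_ : [set _ | _] = set0); first exact: closed0.
  by apply/seteqP; split => v // [-> ]; rewrite ax.
rewrite (_ : [set _ | _] = [set a]).
  exact: accessible_closed_set1 (hausdorff_accessible hG) a.
by apply/seteqP; split => v /=; [case|move=> ->].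
Qed.

Lemma graph_interior_pt (R : realType) (G : topologicalType) n (f : 'I_n -> R -> G) :
  hausdorff_space G -> (forall i, arc_param (f i)) ->
  [set: G] = \bigcup_(i in [set: 'I_n]) arc_of (f i) ->
  forall D : set G, connected D -> forall x y, D x -> D y -> x <> y ->
  exists i t, 0 < t < 1 /\ D (f i t).
Proof.
move=> hG hf cov D cD x y Dx Dy xy; apply: contrapT => H.
pose V := \bigcup_(j in [set: 'I_n]) ([set v | v = f j 0 /\ v <> x] `|` [set v | v = f j 1 /\ v <> x]).
have cV : closed V.
  apply: closed_bigcup; [exact: finite_finset|move=> j _].
  by apply: closedU; apply: closed_pt_neq.
have e : [set x] = D.
  apply: cD; first by exists x.
  2: { exists [set x]. exact: accessible_closed_set1 (hausdorff_accessible hG) x.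
    apply/seteqP; split => z /=; [move=> ->|case]; done. }
  exists (~` V); first exact: closed_openC.
  apply/seteqP; split => z /=.
    move=> ->; split => // -[j _ /=] [[_]|[_]]; exact.
  move=> [Dz nV]; apply: contrapT => zx; apply: nV.
  have : [set: G] z by []. rewrite cov => -[j _ [s]].
  rewrite /= in_itv /= => /andP[s0 s1] fjs.
  exists j => //.
  move: s0; rewrite le_eqVlt => /orP[/eqP e0|s0'].
    by left; split => //; rewrite -fjs -e0.
  move: s1; rewrite le_eqVlt => /orP[/eqP e1|s1'].
    by right; split => //; rewrite -fjs e1.
  by exfalso; apply: H; exists j, s; split; [rewrite s0' | rewrite fjs].
move: Dy; rewrite -e => /= yx; exact: xy (esym yx).
Qed.


Lemma arc_eps (R : realType) (G : topologicalType) (g : R -> G) t w :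
  arc_param g -> 0 < t < 1 -> g t <> w ->
  exists e : R, [/\ 0 < e, 0 < t - e, t + e < 1 &
    forall u, t - e <= u <= t + e -> g u <> w].
Proof.
move=> hg /andP[t0 t1] gtw.
have [[s [/andP[s0 s1] gsw]]|nos] := pselect (exists s, 0 <= s <= 1 /\ g s = w).
  pose m := Num.min (Num.min t (1 - t)) `|s - t|.
  have := lexx m; rewrite {2}/m !le_min => /andP[/andP[mt m1t] ms].
  have st : s != t by apply/eqP => e; apply: gtw; rewrite -e.
  have m0 : 0 < m by rewrite /m !lt_min t0 subr_gt0 t1 normr_gt0 subr_eq0 st.
  exists (m / 2); split; [lra|lra|lra|].
  move=> u /andP[h1 h2] guw.
  have hu : 0 <= u <= 1 by apply/andP; split; lra.
  have us : u = s by apply: (arc_inj hg hu); [rewrite s0 s1|rewrite guw gsw].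
  have : `|s - t| <= m / 2 by rewrite ler_norml -us; apply/andP; split; lra.
  lra.
pose m := Num.min t (1 - t).
have := lexx m; rewrite {2}/m !le_min => /andP[mt m1t].
have m0 : 0 < m by rewrite /m !lt_min t0 subr_gt0 t1.
exists (m / 2); split; [lra|lra|lra|].
move=> u /andP[h1 h2] guw; apply: nos; exists u; split => //.
apply/andP; split; lra.
Qed.

Lemma graph_conn_arc (R : realType) (G : topologicalType) n (f : 'I_n -> R -> G) :
  hausdorff_space G -> (forall i, arc_param (f i)) ->
  [set: G] = \bigcup_(i in [set: 'I_n]) arc_of (f i) ->
  (forall i j, i != j ->
       arc_of (f i) `&` arc_of (f j) `<=` arc_ends (f i) `&` arc_ends (f j)) ->
  forall D : set G, connected D -> forall x y, D x -> D y -> x <> y ->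
  exists i a c, [/\ 0 < a, a < c, c < 1 & f i @` `[a, c] `<=` D].
Proof.
move=> hG hf cov dis D cD x y Dx Dy xy.
have [i [t [/andP[t0 t1] Dz]]] := graph_interior_pt hG hf cov cD Dx Dy xy.
have [w [Dw wz]] : exists w, D w /\ f i t <> w.
  have [e|ne] := pselect (f i t = x); last by exists x.
  by exists y; split => // ey; apply: xy; rewrite -e.
have tt : 0 < t < 1 by rewrite t0 t1.
have [e [e0 te0 te1 he]] := arc_eps (hf i) tt wz.
apply: contrapT => H.
have H' : forall a c, 0 < a -> a < c -> c < 1 ->
    exists u, a <= u <= c /\ ~ D (f i u).
  move=> a c a0 ac c1; apply: contrapT => H2; apply: H; exists i, a, c; split => //.
  move=> v [u]; rewrite /= in_itv /= => hu <-.
  by apply: contrapT => nD; apply: H2; exists u.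
have [u2 [/andP[tu2 u2e] nD2]] := H' t (t + e) t0 (ltac:(lra)) te1.
have [u1 [/andP[u1e u1t] nD1]] := H' (t - e) t te0 (ltac:(lra)) (ltac:(lra)).
have tu2' : t < u2 by rewrite lt_neqAle tu2 andbT; apply/eqP => et; apply: nD2; rewrite -et.
have u1t' : u1 < t by rewrite lt_neqAle u1t andbT; apply/eqP => et; apply: nD1; rewrite et.
have oO := arc_open hG hf cov dis i (ltac:(lra) : 0 <= u1) (ltac:(lra) : u1 < u2) (ltac:(lra) : u2 <= 1).
have eB : D `&` f i @` `]u1, u2[ = D.
  apply: cD.
  - exists (f i t). split; first done. exists t; last done. rewrite /= in_itv /= u1t' tu2'.
    done.
  - by exists (f i @` `]u1, u2[).
  - apply: (@ex_intro2 _ _ _ (f i @` `[u1, u2])); first by apply: arc_seg_closed => //; lra.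
    apply/seteqP; split => v [Dv [u]]; rewrite /= in_itv /= => /andP[h1 h2] fu.
      by split => //; exists u => //; rewrite /= in_itv /= ltW // ltW.
    split => //; exists u => //; rewrite /= in_itv /=; apply/andP; split.
      by rewrite lt_neqAle h1 andbT; apply/eqP => e1; apply: nD1; rewrite e1 fu.
    by rewrite lt_neqAle h2 andbT; apply/eqP => e1; apply: nD2; rewrite -e1 fu.
have : (D `&` f i @` `]u1, u2[) w by rewrite eB.
move=> [_ [u]]; rewrite /= in_itv /= => /andP[h1 h2] fu.
by apply: (he u) => //; apply/andP; split; lra.
Qed.


Lemma chart_nd (R : realType) (E B G : topologicalType) (p : E -> B) (M : set E)
  (U : set B) (h : E -> B * G) (g : B * G -> E) (phi : R -> G) (a c : R) :
  continuous p -> open U ->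
  {within p @^-1` U, continuous h} ->
  {within U `*` [set: G], continuous g} ->
  (forall y, (U `*` [set: G]) y -> (p @^-1` U) (g y)) ->
  (forall x, (p @^-1` U) x -> g (h x) = x) ->
  (forall y, (U `*` [set: G]) y -> h (g y) = y) ->
  closed M -> nowhere_dense M ->
  open (phi @` `]a, c[) -> a < c ->
  nowhere_dense [set b | U b /\ forall s, a <= s <= c -> M (g (b, phi s))].
Proof.
move=> pc oU hc gc gU gh hg cM ndM oO ac.
set P := [set b | _].
rewrite /nowhere_dense; apply/seteqP; split => // b0 hb0.
set V := interior (closure P).
have oV : open V := @open_interior _ _.
have [b1 [Pb1 Vb1]] : (P `&` V) !=set0.
  have := @interior_subset _ _ _ hb0; apply.
  exact: nbhs_interior.
have VUP : V `&` U `<=` P.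
  move=> b [Vb Ub]; split => // s hs; apply: contrapT => nM.
  pose Q := (fun b' : B => (b', phi s)) @^-1` ((U `*` [set: G]) `&` g @^-1` (~` M)).
  have oQ : open Q.
    rewrite /Q; apply: (proj1 (continuousP _) (@pairy_cont B G (phi s))).
    apply: (proj1 (@continuous_inP _ _ _ g (open_setX' oU openT))); last exact: closed_openC.
    by rewrite -continuous_open_subspace //; exact: open_setX' oU openT.
  have cPb : closure P b := interior_subset Vb.
  have [b' [[Ub' Mb'] Qb']] := cPb Q (open_nbhs_nbhs (conj oQ (conj (conj Ub I) nM))).
  by case: Qb' => _ /=; apply; apply: Mb'.
pose W := (p @^-1` U) `&` h @^-1` ((V `&` U) `*` (phi @` `]a, c[)).
have oW : open W.
  have opU : open (p @^-1` U) by apply: (proj1 (continuousP _) pc).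
  apply: (proj1 (@continuous_inP _ _ _ h opU)).
    by rewrite -continuous_open_subspace.
  by apply: open_setX' => //; exact: openI.
have Wx : W (g (b1, phi ((a + c) / 2))).
  have hy : (U `*` [set: G]) (b1, phi ((a + c) / 2)) by split => //; exact: (proj1 Pb1).
  split; first exact: gU.
  rewrite /= hg //; split => //=; first by split => //; exact: (proj1 Pb1).
  by exists ((a + c) / 2) => //; rewrite /= in_itv /=; apply/andP; split; lra.
have WM : W `<=` M.
  move=> x [px [[Vb Ub] [s]]]; rewrite /= in_itv /= => /andP[a_s sc] hs.
  have := (VUP _ (conj Vb Ub)).2 s (ltac:(apply/andP; split; lra)).
  by rewrite hs -surjective_pairing gh.
have : interior (closure M) (g (b1, phi ((a + c) / 2))).
  apply: (filterS (subset_closure (A := M))).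
  apply: (filterS WM); exact: open_nbhs_nbhs (conj oW Wx).
by rewrite ndM.
Qed.


Lemma fin_cover (T : topologicalType) (U : T -> set T) :
  compact [set: T] -> (forall x, open (U x) /\ U x x) ->
  exists D : {fset T}, forall x, exists c, c \in D /\ U c x.
Proof.
move=> cT hU; apply: contrapT => nc.
pose Bf := fun D : {fset T} => [set x | forall c, c \in D -> ~ U c x].
have FF : Filter (filter_from [set: {fset T}] Bf).
  apply: filter_from_filter; first by exists fset0.
  move=> D1 D2 _ _; exists (D1 `|` D2)%fset => // x hx; split => c hc; apply: hx;
    by rewrite inE hc ?orbT.
have PF : ProperFilter (filter_from [set: {fset T}] Bf).
  apply: filter_from_proper => // D _; apply: contrapT => ne; apply: nc; exists D => x.
  apply: contrapT => nx; apply: ne; exists x => c hc Ucx; apply: nx; by exists c.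
have [z [_ cz]] := cT _ PF (filterT).
have [w [hw Uzw]] := cz (Bf [fset z]%fset) (U z) (ltac:(by exists [fset z]%fset))
  (open_nbhs_nbhs (conj (hU z).1 (hU z).2)).
by apply: (hw z) => //; rewrite inE.
Qed.


Lemma nd_sub (T : topologicalType) (A C : set T) :
  A `<=` C -> nowhere_dense C -> nowhere_dense A.
Proof.
move=> AC ndC; rewrite /nowhere_dense; apply/seteqP; split => // x hx.
by rewrite -ndC; apply: (interiorS (closureS AC)).
Qed.

Lemma nd0 (T : topologicalType) : nowhere_dense (@set0 T).
Proof.
rewrite /nowhere_dense closure0; apply/seteqP; split => // x; exact: interior_subset.
Qed.

Definition chart_ok {R : realType} {E B G : pseudoMetricType R} (p : E -> B)
  (b : B) (t : set B * (E -> B * G) * (B * G -> E)) : Prop :=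
  let U := t.1.1 in let h := t.1.2 in let g := t.2 in
  open U /\ U b /\
    {within p @^-1` U, continuous h} /\
    {within U `*` [set: G], continuous g} /\
    (forall x, (p @^-1` U) x -> (U `*` [set: G]) (h x)) /\
    (forall y, (U `*` [set: G]) y -> (p @^-1` U) (g y)) /\
    (forall x, (p @^-1` U) x -> g (h x) = x) /\
    (forall y, (U `*` [set: G]) y -> h (g y) = y) /\
    (forall x, (p @^-1` U) x -> (h x).1 = p x).

Lemma charts {R : realType} (E B G : pseudoMetricType R) (p : E -> B) :
  (forall b : B, exists (U : set B) (h : E -> B * G),
          [/\ open U, U b & local_trivialization p U h]) ->
  exists ch : B -> set B * (E -> B * G) * (B * G -> E), forall b, chart_ok p b (ch b).
Proof.
move=> triv.
suff [ch hch] : {ch : B -> set B * (E -> B * G) * (B * G -> E) & forall b, chart_ok p b (ch b)} by exists ch.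
apply: (@boolp.choice _ _ (fun b t => chart_ok p b t)) => b.
have [U [h [oU Ub [g [? [? [? [? [? [? ?]]]]]]]]]] := triv b.
by exists (U, h, g).
Qed.

Unset Implicit Arguments.
Theorem lemma17 (R : realType) (E B G : pseudoMetricType R) (p : E -> B)
    (M : set E) :
  compact_graph_bundle E B G p -> closed M -> nowhere_dense M ->
  residual [set b : B | totally_disconnected (fiber p M b)].
Proof.
move=> [_ [[_ cB] [[[hG _] [_ [n [f [hf [cov dis]]]]]] [pc [_ triv]]]]] cM ndM.
have [ch hch] := charts triv.
have [D' covD] := @fin_cover B (fun b : B => (ch b).1.1) cB
  (fun b : B => conj (hch b).1 (hch b).2.1).
pose P (c : B) (i : 'I_n) (a d : R) :=
  [set b | (ch c).1.1 b /\ forall s, a <= s <= d -> M ((ch c).2 (b, f i s))].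
pose Fk (key : nat * 'I_n * rat * rat) : set B :=
  [set b | exists c, [/\ c \in D', index c D' = key.1.1.1,
     (0 < (ratr key.1.2 : R) /\ (ratr key.1.2 : R) < ratr key.2 /\ (ratr key.2 : R) < 1) &
     P c key.1.1.2 (ratr key.1.2) (ratr key.2) b]].
exists (fun m => if unpickle m is Some key then Fk key else set0); split.
  move=> m; case: (unpickle m) => [key|]; last exact: nd0.
  have [[c [cD [ic [q0 [q12 q1]]]]]|nex] := pselect (exists c, c \in D' /\
      index c D' = key.1.1.1 /\
      (0 < (ratr key.1.2 : R) /\ (ratr key.1.2 : R) < ratr key.2 /\ (ratr key.2 : R) < 1)).
    apply: (@nd_sub _ _ (P c key.1.1.2 (ratr key.1.2) (ratr key.2))).
      move=> b [c' [c'D ic' _ Pb]].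
      have -> : c = c' by rewrite -(nth_index c cD) -(nth_index c c'D) ic ic'.
      exact: Pb.
    have [oU [_ [hc [gc [_ [gU [gh [hg _]]]]]]]] := hch c.
    apply: (chart_nd pc oU hc gc gU gh hg cM ndM _ q12).
    apply: (arc_open hG hf cov dis) => //; first exact: ltW.
    exact: ltW.
  apply: (@nd_sub _ _ set0); last exact: nd0.
  move=> b [c [cD ic hq _]]; apply: nex; exists c; split => //.
move=> b nb x [Mx pxb].
set S := fiber p M b.
apply: contrapT => hne.
have Cx : connected_component S x x by apply: connected_component_refl.
have [y [Cy yx]] : exists y, connected_component S x y /\ y <> x.
  apply: contrapT => H; apply: hne; apply/seteqP; split => z.
    by move=> Cz; apply: contrapT => zx; apply: H; exists z.
  by move=> /= ->.
have CS : connected_component S x `<=` S := @connected_component_sub _ S x.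
have [c [cD Ucb]] := covD b.
have [oU [_ [hc [gc [hU [gU [gh [hg h1]]]]]]]] := hch c.
have Cb : forall z, connected_component S x z -> p z = b.
  by move=> z /CS [_].
have CpU : connected_component S x `<=` p @^-1` (ch c).1.1.
  by move=> z /Cb; rewrite /preimage /= => ->.
have hsC : {within connected_component S x, continuous (snd \o (ch c).1.2)}.
  have hcC := continuous_subspaceW CpU hc.
  move=> z; apply: (@continuous_comp (subspace (connected_component S x)) _ _ (ch c).1.2 snd z); [exact: hcC|exact: snd_cont].
have cD' := connected_continuous_connected (@component_connected _ S x) hsC.
have hpair : forall z, connected_component S x z -> (ch c).1.2 z = (b, ((ch c).1.2 z).2).
  move=> z Cz; rewrite [LHS]surjective_pairing h1; first by rewrite Cb.
  exact: CpU.
have hxy : (snd \o (ch c).1.2) x <> (snd \o (ch c).1.2) y.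
  move=> e; apply: yx.
  rewrite -(gh y (CpU _ Cy)) -(gh x (CpU _ Cx)) hpair // [in RHS]hpair //.
  by move: e => /= ->.
have [i [a [d [a0 ad d1 sub]]]] :=
  graph_conn_arc hG hf cov dis cD' (imageP _ Cx) (imageP _ Cy) hxy.
have [q1] := rat_in_itvoo ad; rewrite in_itv /= => /andP[aq1 q1d].
have [q2] := rat_in_itvoo q1d; rewrite in_itv /= => /andP[q12 q2d].
apply: nb; exists (pickle (index c D', i, q1, q2)) => //.
rewrite pickleK /=; exists c; split => //.
  split; [lra|split; lra].
split => // s /andP[s1 s2].
have [z Cz e] : ((snd \o (ch c).1.2) @` connected_component S x) (f i s).
  by apply: sub; exists s => //; rewrite /= in_itv /=; apply/andP; split; lra.
have := (CS _ Cz).1; rewrite -(gh z (CpU _ Cz)) hpair //.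
by move: e => /= ->.
Qed.
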